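(* Take a Moore-Penrose dagger category $(\mathbb{X}, \dagger)$ with a \dag-positive map $\begin{bmatrix} \alpha & \beta \\ \beta^\dagger & \delta \end{bmatrix}$ such that $\alpha$ is an isomorphism. Then $\beta^\dagger \circ \alpha^{-1}$ is its unique conditional generator. Therefore, for every object $X \in \mathbb{X}$, if $F= \left( \begin{bmatrix} f \\ g \end{bmatrix}, \begin{bmatrix} \alpha & \beta \\ \beta^\dagger & \delta \end{bmatrix}, \begin{bmatrix} s \\ t \end{bmatrix} \right)$ is a map in $\mathfrak{G}\left[ (\mathbb{X}, \dagger) \right]_X$, then $F\vert_B = \left( \begin{bmatrix} \beta^\dagger \circ \alpha^\circ & g - \beta^\dagger \circ \alpha^\circ \circ f \end{bmatrix}, \delta - \beta^\dagger \circ \alpha^\circ \circ \beta, t - \beta^\dagger \circ \alpha^\circ \circ s \right)$ is its unique conditional.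
   Context: Here $(\mathbb{X}, \dagger)$ is a dagger additive category (a dagger category enriched in abelian groups with additive dagger and finite biproducts satisfying $\pi_j^\dagger = \iota_j$; maps between biproducts are written as matrices, the dagger acting as conjugate transpose) in which every map $f$ has a Moore-Penrose inverse $f^\circ$, i.e. $f \circ f^\circ \circ f = f$, $f^\circ \circ f \circ f^\circ = f^\circ$, $(f \circ f^\circ)^\dagger = f \circ f^\circ$, $(f^\circ \circ f)^\dagger = f^\circ \circ f$. A map $p$ is $\dagger$-positive if $p = \phi^\dagger \circ \phi$ for some $\phi$. The map $\begin{bmatrix} \alpha & \beta \\ \beta^\dagger & \delta \end{bmatrix}: B \oplus C \to B \oplus C$ has $\alpha: B \to B$, $\beta: C \to B$, $\delta: C \to C$. A conditional generator for it is a map $m: B \to C$ with $m \circ \alpha = \beta^\dagger$ and $\delta - m \circ \beta$ $\dagger$-positive. For an object $X$, the Gauss construction $\mathfrak{G}\left[ (\mathbb{X}, \dagger) \right]_X$ is the Markov category with the objects of $\mathbb{X}$, maps $A \to B$ the triples $(f,p,x)$ with $f: A \to B$, $p: B \to B$ $\dagger$-positive, $x: X \to B$; identities $\mathsf{Id}_A = (\mathsf{id}_A,0,0)$; composition $(g,q,y) \circ (f,p,x) = (g \circ f, q + g \circ p \circ g^\dagger, y + g \circ x)$; $A \otimes B = A \oplus B$, $(f,p,x) \otimes (g,q,y) = \left(f \oplus g, p \oplus q, \begin{bmatrix} x \\ y \end{bmatrix}\right)$; copy $\mathsf{copy}_A = \left(\begin{bmatrix} \mathsf{id}_A \\ \mathsf{id}_A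 \end{bmatrix}, 0, 0\right)$, delete $\mathsf{del}_A = (0,0,0): A \to \mathsf{0}$. In $F: A \to B \otimes C$, $f: A \to B$, $g: A \to C$, $s: X \to B$, $t: X \to C$. A map $G: B \otimes A \to C$ is a conditional of $F$ if $(\mathsf{Id}_B \otimes G) \circ (\mathsf{copy}_B \otimes \mathsf{Id}_A) \circ (\mathsf{Id}_B \otimes \mathsf{del}_C \otimes \mathsf{Id}_A) \circ (F \otimes \mathsf{Id}_A) \circ \mathsf{copy}_A = F$. *)

(* Defs.v *)
From HB Require Import structures.
From mathcomp Require Import all_boot all_algebra.
Set Implicit Arguments. Unset Strict Implicit. Unset Printing Implicit Defensive.
Import GRing.Theory.
Local Open Scope ring_scope.

Record MPDagCat := {
  Ob : Type;
  Hm : Ob -> Ob -> zmodType;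
  idm : forall A, Hm A A;
  comp : forall A B C, Hm B C -> Hm A B -> Hm A C;
  compA : forall A B C D (h : Hm C D) (g : Hm B C) (f : Hm A B),
      comp h (comp g f) = comp (comp h g) f;
  comp1m : forall A B (f : Hm A B), comp (idm B) f = f;
  compm1 : forall A B (f : Hm A B), comp f (idm A) = f;
  compDl : forall A B C (g1 g2 : Hm B C) (f : Hm A B),
      comp (g1 + g2) f = comp g1 f + comp g2 f;
  compDr : forall A B C (g : Hm B C) (f1 f2 : Hm A B),
      comp g (f1 + f2) = comp g f1 + comp g f2;
  dag : forall A B, Hm A B -> Hm B A;
  dagK : forall A B (f : Hm A B), dag (dag f) = f;
  dag_id : forall A, dag (idm A) = idm A;
  dag_comp : forall A B C (g : Hm B C) (f : Hm A B),
      dag (comp g f) = comp (dag f) (dag g);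
  dagD : forall A B (f g : Hm A B), dag (f + g) = dag f + dag g;
  zo : Ob;
  zo_id : idm zo = 0;
  bp : Ob -> Ob -> Ob;
  p1 : forall A B, Hm (bp A B) A;
  p2 : forall A B, Hm (bp A B) B;
  i1 : forall A B, Hm A (bp A B);
  i2 : forall A B, Hm B (bp A B);
  p1i1 : forall A B, comp (p1 A B) (i1 A B) = idm A;
  p2i2 : forall A B, comp (p2 A B) (i2 A B) = idm B;
  p1i2 : forall A B, comp (p1 A B) (i2 A B) = 0;
  p2i1 : forall A B, comp (p2 A B) (i1 A B) = 0;
  bp_id : forall A B,
      comp (i1 A B) (p1 A B) + comp (i2 A B) (p2 A B) = idm (bp A B);
  dag_p1 : forall A B, dag (p1 A B) = i1 A B;
  dag_p2 : forall A B, dag (p2 A B) = i2 A B;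
  mp : forall A B, Hm A B -> Hm B A;
  mp1 : forall A B (f : Hm A B), comp f (comp (mp f) f) = f;
  mp2 : forall A B (f : Hm A B), comp (mp f) (comp f (mp f)) = mp f;
  mp3 : forall A B (f : Hm A B), dag (comp f (mp f)) = comp f (mp f);
  mp4 : forall A B (f : Hm A B), dag (comp (mp f) f) = comp (mp f) f
}.

Arguments Hm {m}.
Arguments idm {m}.
Arguments comp {m A B C}.
Arguments dag {m A B}.
Arguments zo {m}.
Arguments bp {m}.
Arguments p1 {m}.
Arguments p2 {m}.
Arguments i1 {m}.
Arguments i2 {m}.
Arguments mp {m A B}.

Notation "g \oc f" := (comp g f) (at level 40, left associativity).
Notation "f ^+dag" := (dag f) (at level 2, format "f ^+dag").
Notation "f ^+mp" := (mp f) (at level 2, format "f ^+mp").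

Section Matrices.
Variable X : MPDagCat.

Definition col2 {A B C : Ob X} (f : Hm A B) (g : Hm A C) : Hm A (bp B C) :=
  i1 B C \oc f + i2 B C \oc g.
Definition row2 {B C D : Ob X} (h : Hm B D) (k : Hm C D) : Hm (bp B C) D :=
  h \oc p1 B C + k \oc p2 B C.
(* 2x2 matrix [[a, b], [c, d]] : B (+) C -> B' (+) C' *)
Definition mx22 {B C B' C' : Ob X} (a : Hm B B') (b : Hm C B')
    (c : Hm B C') (d : Hm C C') : Hm (bp B C) (bp B' C') :=
  i1 B' C' \oc a \oc p1 B C + i1 B' C' \oc b \oc p2 B C
  + i2 B' C' \oc c \oc p1 B C + i2 B' C' \oc d \oc p2 B C.
Definition dsum {A A' B B' : Ob X} (f : Hm A B) (g : Hm A' B') :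
    Hm (bp A A') (bp B B') :=
  i1 B B' \oc f \oc p1 A A' + i2 B B' \oc g \oc p2 A A'.

Definition dag_positive {A : Ob X} (p : Hm A A) : Prop :=
  exists (Y : Ob X) (phi : Hm A Y), p = phi^+dag \oc phi.

Definition is_iso {A B : Ob X} (f : Hm A B) : Prop :=
  exists g : Hm B A, g \oc f = idm A /\ f \oc g = idm B.

Definition cond_generator {B C : Ob X} (alpha : Hm B B) (beta : Hm C B)
    (delta : Hm C C) (m : Hm B C) : Prop :=
  m \oc alpha = beta^+dag /\ dag_positive (delta - m \oc beta).

Variable Xo : Ob X.

Record GMap (A B : Ob X) := GM { gf : Hm A B; gp : Hm B B; gx : Hm Xo B }.

Definition gauss_map {A B : Ob X} (F : GMap A B) : Prop := dag_positive (gp F).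

Definition Gid (A : Ob X) : GMap A A := GM (idm A) 0 0.
Definition Gcomp {A B C : Ob X} (G : GMap B C) (F : GMap A B) : GMap A C :=
  GM (gf G \oc gf F) (gp G + gf G \oc gp F \oc (gf G)^+dag) (gx G + gf G \oc gx F).
Definition Gtens {A B A' B' : Ob X} (F : GMap A B) (G : GMap A' B') :
    GMap (bp A A') (bp B B') :=
  GM (dsum (gf F) (gf G)) (dsum (gp F) (gp G)) (col2 (gx F) (gx G)).
Definition Gcopy (A : Ob X) : GMap A (bp A A) := GM (col2 (idm A) (idm A)) 0 0.
Definition Gdel (A : Ob X) : GMap A zo := GM 0 0 0.
Definition assocm (A B C : Ob X) : Hm (bp (bp A B) C) (bp A (bp B C)) :=
  i1 A (bp B C) \oc p1 A B \oc p1 (bp A B) C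
  + i2 A (bp B C) \oc i1 B C \oc p2 A B \oc p1 (bp A B) C
  + i2 A (bp B C) \oc i2 B C \oc p2 (bp A B) C.
Definition Gassoc (A B C : Ob X) : GMap (bp (bp A B) C) (bp A (bp B C)) :=
  GM (assocm A B C) 0 0.
Definition Glunit (A : Ob X) : GMap (bp zo A) A := GM (p2 zo A) 0 0.

(* G : B (x) A -> C is a conditional of F : A -> B (x) C :
   (Id_B (x) G) o (copy_B (x) Id_A) o (Id_B (x) del_C (x) Id_A) o (F (x) Id_A) o copy_A = F,
   with the associators / unitor made explicit. *)
Definition conditional {A B C : Ob X} (F : GMap A (bp B C)) (G : GMap (bp B A) C) :
    Prop :=
  Gcomp (Gtens (Gid B) G)
   (Gcomp (Gassoc B B A)
    (Gcomp (Gtens (Gcopy B) (Gid A))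
     (Gcomp (Gtens (Gid B) (Glunit A))
      (Gcomp (Gtens (Gid B) (Gtens (Gdel C) (Gid A)))
       (Gcomp (Gassoc B C A)
        (Gcomp (Gtens F (Gid A)) (Gcopy A))))))) = F.

End Matrices.

(* Main.v *)
Set Warnings "-notation-overridden,-ambiguous-paths".
From Pilot Require Import Defs.
From mathcomp Require Import all_boot all_algebra.
From Stdlib Require Import Setoid.
Import GRing.Theory.
Local Open Scope ring_scope.
Definition ccA := Pilot.Defs.compA.
Section L.
Variable X : MPDagCat.
Implicit Types A B C D : Ob X.
Lemma comp0m A B C (f : Hm A B) : (0 : Hm B C) \oc f = 0.
Proof. by apply: (addrI ((0 : Hm B C) \oc f)); rewrite -compDl !addr0. Qed.
Lemma compm0 A B C (g : Hm B C) : g \oc (0 : Hm A B) = 0.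
Proof. by apply: (addrI (g \oc (0 : Hm A B))); rewrite -compDr !addr0. Qed.
Lemma compNl A B C (g : Hm B C) (f : Hm A B) : (- g) \oc f = - (g \oc f).
Proof. by apply: (addrI (g \oc f)); rewrite -compDl !subrr comp0m. Qed.
Lemma compNr A B C (g : Hm B C) (f : Hm A B) : g \oc (- f) = - (g \oc f).
Proof. by apply: (addrI (g \oc f)); rewrite -compDr !subrr compm0. Qed.
Lemma dag0 A B : (0 : Hm A B)^+dag = 0.
Proof. by apply: (addrI (0 : Hm A B)^+dag); rewrite -dagD !addr0. Qed.
Lemma dagN A B (f : Hm A B) : (- f)^+dag = - f^+dag.
Proof. by apply: (addrI f^+dag); rewrite -dagD !subrr dag0. Qed.
Lemma dag_i1 A B : (i1 A B)^+dag = p1 A B.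
Proof. by rewrite -dag_p1 dagK. Qed.
Lemma dag_i2 A B : (i2 A B)^+dag = p2 A B.
Proof. by rewrite -dag_p2 dagK. Qed.
Lemma p1i1' A B D (x : Hm A D) : x \oc p1 A B \oc i1 A B = x.
Proof. by rewrite -ccA p1i1 compm1. Qed.
Lemma p2i2' A B D (x : Hm B D) : x \oc p2 A B \oc i2 A B = x.
Proof. by rewrite -ccA p2i2 compm1. Qed.
Lemma p1i2' A B D (x : Hm A D) : x \oc p1 A B \oc i2 A B = 0.
Proof. by rewrite -ccA p1i2 compm0. Qed.
Lemma p2i1' A B D (x : Hm B D) : x \oc p2 A B \oc i1 A B = 0.
Proof. by rewrite -ccA p2i1 compm0. Qed.
Lemma ext_out A B D (u v : Hm (bp A B) D) :
  u \oc i1 A B = v \oc i1 A B -> u \oc i2 A B = v \oc i2 A B -> u = v.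
Proof.
move=> h1 h2; rewrite -(compm1 u) -(compm1 v) -bp_id !compDr !ccA h1 h2 //.
Qed.
Lemma ext_in A B D (u v : Hm D (bp A B)) :
  p1 A B \oc u = p1 A B \oc v -> p2 A B \oc u = p2 A B \oc v -> u = v.
Proof.
move=> h1 h2; rewrite -(comp1m u) -(comp1m v) -bp_id !compDl -!ccA h1 h2 //.
Qed.
End L.
Ltac simp := rewrite ?(compDl, compDr, compNl, compNr, comp0m, compm0, ccA,
  comp1m, compm1, p1i1, p2i2, p1i2, p2i1, p1i1', p2i2', p1i2', p2i1',
  dag_comp, dagD, dagN, dag0, dag_p1, dag_p2, dag_i1, dag_i2, dag_id, dagK,
  addr0, add0r, oppr0, opprK, subr0, sub0r).
Section M.
Variable X : MPDagCat.
Implicit Types A B C D E : Ob X.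
Lemma m_p1 A B : p1 A B = row2 (idm A) 0.
Proof. by rewrite /row2; simp. Qed.
Lemma m_p2 A B : p2 A B = row2 0 (idm B).
Proof. by rewrite /row2; simp. Qed.
Lemma m_i1 A B : i1 A B = col2 (idm A) 0.
Proof. by rewrite /col2; simp. Qed.
Lemma m_i2 A B : i2 A B = col2 0 (idm B).
Proof. by rewrite /col2; simp. Qed.
Lemma m_dsum A B A' B' (f : Hm A B) (g : Hm A' B') : dsum f g = mx22 f 0 0 g.
Proof. by rewrite /dsum /mx22; simp. Qed.
Lemma m_assoc A B C : assocm A B C = mx22 (p1 A B) 0 (i1 B C \oc p2 A B) (i2 B C).
Proof. by rewrite /assocm /mx22; simp. Qed.
Lemma cc_comp A B C D (u : Hm C A) (v : Hm C B) (w : Hm D C) :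
  col2 u v \oc w = col2 (u \oc w) (v \oc w).
Proof. by apply: ext_in; rewrite /col2; simp. Qed.
Lemma comp_rr A B C D (h : Hm A C) (k : Hm B C) (w : Hm C D) :
  w \oc row2 h k = row2 (w \oc h) (w \oc k).
Proof. by apply: ext_out; rewrite /row2; simp. Qed.
Lemma rr_cc A B C D (h : Hm A D) (k : Hm B D) (u : Hm C A) (v : Hm C B) :
  row2 h k \oc col2 u v = h \oc u + k \oc v.
Proof. by rewrite /row2 /col2; simp. Qed.
Lemma rr_mx A B A' B' D (h : Hm A' D) (k : Hm B' D) (a : Hm A A') (b : Hm B A')
  (c : Hm A B') (d : Hm B B') :
  row2 h k \oc mx22 a b c d = row2 (h \oc a + k \oc c) (h \oc b + k \oc d).
Proof. by apply: ext_out; rewrite /row2 /mx22; simp. Qed.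
Lemma mx_cc A B A' B' D (a : Hm A A') (b : Hm B A') (c : Hm A B') (d : Hm B B')
  (u : Hm D A) (v : Hm D B) :
  mx22 a b c d \oc col2 u v = col2 (a \oc u + b \oc v) (c \oc u + d \oc v).
Proof. by apply: ext_in; rewrite /col2 /mx22; simp. Qed.




Lemma cc_rr2 A B C D (a : Hm A C) (b : Hm B C) (c : Hm A D) (d : Hm B D) :
  col2 (row2 a b) (row2 c d) = mx22 a b c d.
Proof. by apply: ext_in; apply: ext_out; rewrite /mx22 /col2 /row2; simp. Qed.
Lemma rr_cc2 A B C D (a : Hm A C) (b : Hm B C) (c : Hm A D) (d : Hm B D) :
  row2 (col2 a c) (col2 b d) = mx22 a b c d.
Proof. by apply: ext_in; apply: ext_out; rewrite /mx22 /col2 /row2; simp. Qed.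
Lemma cc_rr A B C D E (u : Hm C A) (v : Hm C B) (h : Hm D C) (k : Hm E C) :
  col2 u v \oc row2 h k = mx22 (u \oc h) (u \oc k) (v \oc h) (v \oc k).
Proof. by rewrite cc_comp !comp_rr cc_rr2. Qed.
Lemma mx_mx A B A' B' A'' B'' (a : Hm A' A'') (b : Hm B' A'') (c : Hm A' B'') (d : Hm B' B'')
  (a' : Hm A A') (b' : Hm B A') (c' : Hm A B') (d' : Hm B B') :
  mx22 a b c d \oc mx22 a' b' c' d' =
  mx22 (a \oc a' + b \oc c') (a \oc b' + b \oc d') (c \oc a' + d \oc c') (c \oc b' + d \oc d').
Proof. by rewrite -[mx22 a' b' c' d']rr_cc2 comp_rr !mx_cc rr_cc2. Qed.
Lemma cc_add A B C (u u' : Hm C A) (v v' : Hm C B) :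
  col2 u v + col2 u' v' = col2 (u + u') (v + v').
Proof. by apply: ext_in; rewrite /col2; simp. Qed.
Lemma rr_add A B C (u u' : Hm A C) (v v' : Hm B C) :
  row2 u v + row2 u' v' = row2 (u + u') (v + v').
Proof. by apply: ext_out; rewrite /row2; simp. Qed.
Lemma mx_add A B A' B' (a a' : Hm A A') (b b' : Hm B A') (c c' : Hm A B') (d d' : Hm B B') :
  mx22 a b c d + mx22 a' b' c' d' = mx22 (a + a') (b + b') (c + c') (d + d').
Proof. by rewrite -[mx22 a b c d]cc_rr2 -[mx22 a' b' c' d']cc_rr2 cc_add !rr_add cc_rr2. Qed.

Lemma cc_opp A B C (u : Hm C A) (v : Hm C B) : - col2 u v = col2 (- u) (- v).
Proof. by apply: ext_in; rewrite /col2; simp. Qed.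
Lemma rr_opp A B C (u : Hm A C) (v : Hm B C) : - row2 u v = row2 (- u) (- v).
Proof. by apply: ext_out; rewrite /row2; simp. Qed.


Lemma dag_cc A B C (u : Hm C A) (v : Hm C B) : (col2 u v)^+dag = row2 u^+dag v^+dag.
Proof. by rewrite /col2 /row2; simp. Qed.
Lemma dag_rr A B C (u : Hm A C) (v : Hm B C) : (row2 u v)^+dag = col2 u^+dag v^+dag.
Proof. by rewrite /col2 /row2; simp. Qed.
Lemma mx_opp A B A' B' (a : Hm A A') (b : Hm B A') (c : Hm A B') (d : Hm B B') :
  - mx22 a b c d = mx22 (- a) (- b) (- c) (- d).
Proof. by rewrite -[mx22 a b c d]cc_rr2 cc_opp !rr_opp cc_rr2. Qed.
Lemma dag_mx A B A' B' (a : Hm A A') (b : Hm B A') (c : Hm A B') (d : Hm B B') :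
  (mx22 a b c d)^+dag = mx22 a^+dag c^+dag b^+dag d^+dag.
Proof. by rewrite -[mx22 a b c d]cc_rr2 dag_cc !dag_rr rr_cc2. Qed.

Lemma m_mx A B A' B' (a : Hm A A') (b : Hm B A') (c : Hm A B') (d : Hm B B') :
  mx22 a b c d = col2 (row2 a b) (row2 c d).
Proof. by rewrite cc_rr2. Qed.
Lemma rr_cc3 A B C D (a : Hm A C) (b : Hm B C) (c : Hm A D) (d : Hm B D) :
  row2 (col2 a c) (col2 b d) = col2 (row2 a b) (row2 c d).
Proof. by rewrite rr_cc2 cc_rr2. Qed.
Lemma rr00 A B C : row2 (0 : Hm A C) (0 : Hm B C) = 0.
Proof. by rewrite /row2 !comp0m addr0. Qed.
Lemma cc00 A B C : col2 (0 : Hm C A) (0 : Hm C B) = 0.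
Proof. by rewrite /col2 !compm0 addr0. Qed.
Lemma rr0c A B C D (b : Hm B C) (d : Hm B D) :
  row2 (0 : Hm A (bp C D)) (col2 b d) = col2 (row2 0 b) (row2 0 d).
Proof. by rewrite -rr_cc3 cc00. Qed.
Lemma rrc0 A B C D (a : Hm A C) (c : Hm A D) :
  row2 (col2 a c) (0 : Hm B (bp C D)) = col2 (row2 a 0) (row2 c 0).
Proof. by rewrite -rr_cc3 cc00. Qed.
Lemma addm0 A B (x : Hm A B) : x + 0 = x. Proof. exact: addr0. Qed.
Lemma add0m A B (x : Hm A B) : 0 + x = x. Proof. exact: add0r. Qed.
Lemma oppm0 A B : - (0 : Hm A B) = 0. Proof. exact: oppr0. Qed.
Lemma col2_inj A B C (u u' : Hm C A) (v v' : Hm C B) :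
  col2 u v = col2 u' v' -> u = u' /\ v = v'.
Proof.
move=> H; split.
  by move: (congr1 (fun w => p1 A B \oc w) H); rewrite /col2; simp.
by move: (congr1 (fun w => p2 A B \oc w) H); rewrite /col2; simp.
Qed.
Lemma row2_inj A B C (u u' : Hm A C) (v v' : Hm B C) :
  row2 u v = row2 u' v' -> u = u' /\ v = v'.
Proof.
move=> H; split.
  by move: (congr1 (fun w => w \oc i1 A B) H); rewrite /row2; simp.
by move: (congr1 (fun w => w \oc i2 A B) H); rewrite /row2; simp.
Qed.
End M.

Hint Rewrite dag_cc dag_rr dag_comp dagD dagN dag0 dag_id dagK
    comp0m compm0 addm0 add0m oppm0 rr00 cc00 rr0c rrc0 rr_cc3 rr_cc cc_add rr_add cc_opp rr_opp comp1m compm1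
    cc_comp comp_rr : mxdb.
Ltac mnorm := rewrite ?(m_dsum, m_assoc); rewrite ?m_mx; rewrite ?(m_p1, m_p2, m_i1, m_i2);
  repeat (rewrite_strat (bottomup (hints mxdb)));
  rewrite ?(dag_cc, dag_rr, dag_comp, dagD, dagN, dag0, dag_id, dagK,
    comp0m, compm0, addr0, add0r, oppr0, rr00, cc00, rr0c, rrc0, rr_cc3, rr_cc, cc_add, rr_add, cc_opp, rr_opp, comp1m, compm1,
    cc_comp, comp_rr).
Lemma mp_inv (X : MPDagCat) (B : Ob X) (a ai : Hm B B) :
  ai \oc a = idm B -> a \oc ai = idm B -> a^+mp = ai.
Proof.
move=> h1 h2; have := mp1 a.
move/(congr1 (fun u => ai \oc (u \oc ai))).
by rewrite !ccA h1 comp1m -!ccA h2 !compm1 comp1m.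
Qed.

Theorem mainTheorem15 (X : MPDagCat) (B C : Ob X)
    (alpha : Hm B B) (beta : Hm C B) (delta : Hm C C) :
  dag_positive (mx22 alpha beta beta^+dag delta) ->
  is_iso alpha ->
  (forall alpha_inv : Hm B B,
     alpha_inv \oc alpha = idm B -> alpha \oc alpha_inv = idm B ->
     cond_generator alpha beta delta (beta^+dag \oc alpha_inv) /\
     (forall m : Hm B C, cond_generator alpha beta delta m ->
        m = beta^+dag \oc alpha_inv)) /\
  (forall (Xo A : Ob X) (f : Hm A B) (g : Hm A C) (s : Hm Xo B) (t : Hm Xo C),
     let F : GMap Xo A (bp B C) :=
       GM (col2 f g) (mx22 alpha beta beta^+dag delta) (col2 s t) in
     let FB : GMap Xo (bp B A) C :=
       GM (row2 (beta^+dag \oc alpha^+mp) (g - beta^+dag \oc alpha^+mp \oc f))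
          (delta - beta^+dag \oc alpha^+mp \oc beta)
          (t - beta^+dag \oc alpha^+mp \oc s) in
     gauss_map FB /\ conditional F FB /\
     (forall G : GMap Xo (bp B A) C, gauss_map G -> conditional F G -> G = FB)).
Proof.
move=> [Y [phi HS]] [ai [hai1 hai2]].
have Ha : alpha = p1 B C \oc phi^+dag \oc phi \oc i1 B C.
  by move/(congr1 (fun u => p1 B C \oc u \oc i1 B C)): HS; rewrite /mx22; simp.
have Hb : beta = p1 B C \oc phi^+dag \oc phi \oc i2 B C.
  by move/(congr1 (fun u => p1 B C \oc u \oc i2 B C)): HS; rewrite /mx22; simp.
have Hd : delta = p2 B C \oc phi^+dag \oc phi \oc i2 B C.
  by move/(congr1 (fun u => p2 B C \oc u \oc i2 B C)): HS; rewrite /mx22; simp.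
have Hadag : alpha^+dag = alpha by rewrite Ha; simp.
have Haidag : ai^+dag = ai.
  by rewrite -[LHS]compm1 -hai2 ccA -{1}Hadag -dag_comp hai2 dag_id comp1m.
have hai1' : forall Z (x : Hm B Z), x \oc ai \oc p1 B C \oc phi^+dag \oc phi \oc i1 B C = x.
  by move=> Z x; rewrite -[RHS]compm1 -hai1 Ha; simp.
have Hpos : dag_positive (delta - beta^+dag \oc ai \oc beta).
  exists Y; exists (phi \oc i2 B C - phi \oc i1 B C \oc ai \oc p1 B C \oc phi^+dag \oc phi \oc i2 B C).
  by rewrite Hd Hb; simp; rewrite ?Haidag ?hai1' addNr addr0.
split.
  move=> ai' h1 h2.
  have -> : ai' = ai by rewrite -[LHS]compm1 -hai2 ccA h1 comp1m.
  split; first by split => //; rewrite -ccA hai1 compm1.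
  by move=> m [hm _]; rewrite -hm -ccA hai2 compm1.
rewrite (@mp_inv _ _ _ _ hai1 hai2) => Xo A f g s t; cbv zeta.
split; first exact: Hpos.
have hA1 : forall Z (x : Hm B Z), x \oc ai \oc alpha = x.
  by move=> Z x; rewrite -ccA hai1 compm1.
have hA2 : forall Z (x : Hm B Z), x \oc alpha \oc ai = x.
  by move=> Z x; rewrite -ccA hai2 compm1.
split.
  cbv beta iota zeta delta [conditional Gcomp Gtens Gid Gassoc Gcopy Glunit Gdel gf gp gx].
  f_equal.
  - by mnorm; rewrite addrC subrK.
  - mnorm. by rewrite Haidag !ccA hai2 comp1m !hA1 subrK.
  - by mnorm; rewrite subrK.
move=> [h q y] _.
cbv beta iota zeta delta [conditional Gcomp Gtens Gid Gassoc Gcopy Glunit Gdel gf gp gx].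
have Eh : h = row2 (h \oc i1 B A) (h \oc i2 B A) by apply: ext_out; rewrite /row2; simp.
rewrite Eh; move: (h \oc i1 B A) (h \oc i2 B A) => h1 h2 {Eh h}.
mnorm.
case=> /col2_inj [_ Hf] /col2_inj [/row2_inj [_ Hp12] /row2_inj [Hp21 Hp22]] /col2_inj [_ Hx].
have Eh1 : h1 = beta^+dag \oc ai by rewrite -Hp21 hA2.
f_equal.
- by rewrite -Eh1 -Hf [h1 \oc f + h2]addrC addrK.
- by rewrite -Hp22 Hp21 Eh1 dag_comp dagK Haidag ccA addrK.
- by rewrite -Hx -Eh1 addrK.
Qed.
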